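(* Let $n\ge p$, $\Psi\in\mathbb R^{n\times p}$ with $\|\Psi\|_2<1$, and set $\epsilon_0=\tfrac12(1-\|\Psi\|_2)$. There is a constant $K_{n,p,\epsilon_0}>0$ depending only on $n,p,\epsilon_0$ such that for every $p\times p$ diagonal matrix $D$ with positive diagonal entries, every $M\in\mathcal V_{n,p}$ and every $V\in\mathcal V_{p,p}$, $$\frac{\mathrm{etr}(VDM^T\Psi)}{{}_0F_1\!\left(\tfrac n2,\tfrac{D^2}{4}\right)}<\frac{\mathrm{etr}(-\epsilon_0 D)}{K_{n,p,\epsilon_0}}.$$
   Context: $\mathcal V_{n,p}=\{X\in\mathbb R^{n\times p}:X^TX=I_p\}$ (so $\mathcal V_{p,p}=O(p)$), with normalized Haar probability measure $[dX]$. $\|\cdot\|_2$ is the spectral norm, $\mathrm{etr}(A)=\exp(\mathrm{tr}A)$. For diagonal $D$ with diagonal $\boldsymbol d$, ${}_0F_1\!\left(\tfrac n2,\tfrac{D^2}{4}\right)=\int_{\mathcal V_{n,p}}\exp\big(\sum_j d_jX_{jj}\big)[dX]$. *)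

(* Defs.v *)
From HB Require Import structures.
From mathcomp Require Import all_boot all_order all_algebra.
From mathcomp Require Import all_classical all_reals all_analysis.
From mathcomp Require Import matrix_normedtype.
Import numFieldNormedType.Exports.
Set Implicit Arguments. Unset Strict Implicit. Unset Printing Implicit Defensive.
Import Order.TTheory GRing.Theory Num.Theory.
Local Open Scope ring_scope.
Local Open Scope classical_set_scope.

Definition stiefel (R : realType) (n p : nat) (X : 'M[R]_(n, p)) : Prop :=
  X^T *m X = 1%:M.

Definition etr (R : realType) (k : nat) (A : 'M[R]_k) : R := expR (\tr A).

Definition vnorm2 (R : realType) (k : nat) (x : 'cV[R]_k) : R :=
  Num.sqrt (\sum_(i < k) x i 0 ^+ 2).

Definition spec_norm (R : realType) (n p : nat) (A : 'M[R]_(n, p)) : R :=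
  sup [set vnorm2 (A *m x) | x in [set x : 'cV[R]_p | vnorm2 x = 1]].

(* [X] : T -> 'M_(n,p) on the probability space (T, P) has as law the
   normalized Haar probability measure [dX] on V_{n,p}: its values lie in
   V_{n,p}, its entries are measurable, and its law is invariant under left
   multiplication by any orthogonal Q in O(n) (tested against all continuous
   functions). *)
Definition haar_stiefel (R : realType) (n p : nat) (d : measure_display)
  (T : measurableType d) (P : probability T R) (X : T -> 'M[R]_(n, p)) : Prop :=
  [/\ forall t, stiefel (X t),
      forall i j, measurable_fun setT (fun t => X t i j) &
      forall Q : 'M[R]_n, Q^T *m Q = 1%:M ->
        forall f : 'M[R]_(n, p) -> R, continuous f ->
          (\int[P]_t (f (X t))%:E = \int[P]_t (f (Q *m X t))%:E)%E].

(* 0F1(n/2, D^2/4) = \int_{V_{n,p}} exp(sum_j d_j X_jj) [dX], D = diag(d) *)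
Definition hyp0F1 (R : realType) (n p : nat) (d : measure_display)
  (T : measurableType d) (P : probability T R) (X : T -> 'M[R]_(n, p))
  (dd : 'I_p -> R) : R :=
  Rintegral P setT (fun t =>
    expR (\sum_(i < n) \sum_(j < p) if (i == j :> nat) then dd j * X t i j else 0)).

(* Main.v *)
Require Import Defs.
From HB Require Import structures.
From mathcomp Require Import all_boot all_order all_algebra.
From mathcomp Require Import all_classical all_reals all_analysis.
From mathcomp Require Import matrix_normedtype.
Import numFieldNormedType.Exports.
Import Order.TTheory GRing.Theory Num.Theory.
Local Open Scope ring_scope.
From mathcomp Require Import lra ring.
Set Implicit Arguments. Unset Strict Implicit. Unset Printing Implicit Defensive.

Definition E0 (R : realType) n p : 'M[R]_(n,p) := \matrix_(i < n, j < p) (i == j :> nat)%:R.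

Lemma sum_delta (R : realType) n (k0 : 'I_n) (f : 'I_n -> R) :
  \sum_l ((l == k0)%:R * f l) = f k0.
Proof.
rewrite (bigD1 k0) //= eqxx mul1r big1 ?addr0 // => l /negbTE ->; by rewrite mul0r.
Qed.

Lemma orth_mul (R : realType) n (H Q : 'M[R]_n) :
  H^T *m H = 1%:M -> Q^T *m Q = 1%:M -> (H *m Q)^T *m (H *m Q) = 1%:M.
Proof.
move=> hH hQ; rewrite trmx_mul mulmxA -(mulmxA Q^T) hH mulmx1 hQ //.
Qed.

Lemma house (R : realType) n (v : 'cV[R]_n) :
  let c := \sum_l (v l 0) ^+ 2 in
  let H := 1%:M - (2 / c) *: (v *m v^T) in
  H^T *m H = 1%:M.
Proof.
move=> c H.
have HT : H^T = H by rewrite /H linearB /= trmx1 linearZ /= trmx_mul trmxK.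
rewrite HT.
have vv : v^T *m v = c%:M.
  apply/matrixP => i j; rewrite !ord1 !mxE /c; apply: eq_bigr => l _.
  by rewrite !mxE expr2.
have XX : (v *m v^T) *m (v *m v^T) = c *: (v *m v^T).
  by rewrite mulmxA -(mulmxA v) vv mul_mx_scalar scalemxAl.
have [c0|c0] := eqVneq c 0.
  by rewrite /H c0 invr0 mulr0 scale0r subr0 mulmx1.
rewrite /H mulmxBl mul1mx mulmxBr mulmx1 -scalemxAl -scalemxAr XX scalerA.
set X := v *m v^T. set s := 2 / c. rewrite opprB.
rewrite scalerA.
have -> : s * s * c = s + s by rewrite /s -mulrA divfK // mulr_natr mulr2n. 
by rewrite scalerDl addrK subrK.
Qed.
Definition fro (R : realType) n p (A : 'M[R]_(n,p)) := \sum_i \sum_j (A i j) ^+ 2.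

Lemma froE (R : realType) n p (A : 'M[R]_(n,p)) : fro A = \tr (A^T *m A).
Proof.
rewrite /fro /mxtrace exchange_big; apply: eq_bigr => j _; rewrite mxE.
by apply: eq_bigr => i _; rewrite !mxE expr2.
Qed.

Lemma fro_orth (R : realType) n p (Q : 'M[R]_n) (A : 'M[R]_(n,p)) :
  Q^T *m Q = 1%:M -> fro (Q *m A) = fro A.
Proof.
by move=> hQ; rewrite !froE trmx_mul mulmxA -(mulmxA A^T) hQ mulmx1.
Qed.

Lemma fro_ge0 (R : realType) n p (A : 'M[R]_(n,p)) : 0 <= fro A.
Proof. by apply: sumr_ge0 => i _; apply: sumr_ge0 => j _; exact: sqr_ge0. Qed.

Lemma froN (R : realType) n p (A : 'M[R]_(n,p)) : fro (- A) = fro A.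
Proof. by apply: eq_bigr => i _; apply: eq_bigr => j _; rewrite mxE sqrrN. Qed.

Lemma fro_add (R : realType) n p (A B : 'M[R]_(n,p)) :
  fro (A + B) <= 2 * fro A + 2 * fro B.
Proof.
rewrite /fro !mulr_sumr -big_split /=; apply: ler_sum => i _.
rewrite !mulr_sumr -big_split /=; apply: ler_sum => j _.
rewrite mxE; set a := A i j; set b := B i j.
have := sqr_ge0 (a - b); nra.
Qed.

Lemma fro_col (R : realType) n p (Y : 'M[R]_(n,p)) (j : 'I_p) (jn : 'I_n) :
  val jn = val j -> Y^T *m Y = 1%:M -> 2 - 2 * Y jn j <= fro (Y - E0 R n p).
Proof.
move=> ej hY.
have h1 : \sum_i (Y i j) ^+ 2 = 1.
  have := congr1 (fun M : 'M[R]_p => M j j) hY; rewrite !mxE eqxx /= => h; apply: etrans h; apply: esym.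
  by apply: eq_bigr => i _; rewrite !mxE expr2.
apply: (@le_trans _ _ (\sum_i ((Y - E0 R n p) i j) ^+ 2)).
  have -> : \sum_i ((Y - E0 R n p) i j) ^+ 2 =
     \sum_i (Y i j) ^+ 2 - 2 * \sum_i ((i == jn)%:R * Y i j) + \sum_i ((i == jn)%:R * 1).
    rewrite mulr_sumr -!sumrB -big_split /=; apply: eq_bigr => i _.
    rewrite !mxE; have -> : (i == j :> nat) = (i == jn) by rewrite -ej.
    by case: (i == jn); rewrite /= ?mul1r ?mul0r ?subr0; ring.
  by rewrite h1 !sum_delta; lra.
apply: ler_sum => i _.
rewrite (bigD1 j) //= lerDl; apply: sumr_ge0 => k _; exact: sqr_ge0.
Qed.
Lemma round_entry (R : realType) (N : nat) (y : R) : (0 < N)%N -> -1 <= y <= 1 ->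
  exists k : 'I_(2 * N).+1, (y - (k%:R / N%:R - 1)) ^+ 2 <= 1 / (N%:R ^+ 2).
Proof.
move=> N0 /andP[y1 y2].
have N0' : 0 < N%:R :> R by rewrite ltr0n.
set x := (y + 1) * N%:R.
have x0 : 0 <= x by apply: mulr_ge0; [lra|exact: ltW].
have x2 : x < (2 * N).+1%:R.
  rewrite /x -addn1 natrD natrM; have : (y + 1) * N%:R <= 2 * N%:R by rewrite ler_pM2r //; lra.
  lra.
have hk : (Num.trunc x < (2 * N).+1)%N by rewrite truncn_lt_nat.
exists (Ordinal hk) => /=.
have /andP[k1 k2] := truncn_itv x0.
set k := (Num.trunc x)%:R in k1 k2 *.
have -> : y - (k / N%:R - 1) = (x - k) / N%:R.
  rewrite /x; field; by rewrite gt_eqF.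
rewrite expr_div_n ler_pM2r ?invr_gt0 ?exprn_gt0 //.
have : 0 <= x - k < 1 by lra.
move=> /andP[a b]; nra.
Qed.
Definition grid (R : realType) n p N (z : 'M['I_(2 * N).+1]_(n,p)) : 'M[R]_(n,p) :=
  \matrix_(i, j) ((z i j)%:R / N%:R - 1).

Lemma stiefel_entry (R : realType) n p (Y : 'M[R]_(n,p)) i j :
  Y^T *m Y = 1%:M -> -1 <= Y i j <= 1.
Proof.
move=> hY.
have h1 : \sum_i (Y i j) ^+ 2 = 1.
  have := congr1 (fun M : 'M[R]_p => M j j) hY; rewrite !mxE eqxx /= => h; apply: etrans h; apply: esym.
  by apply: eq_bigr => l _; rewrite !mxE expr2.
have : Y i j ^+ 2 <= 1.
  rewrite -h1 (bigD1 i) //= lerDl; apply: sumr_ge0 => l _; exact: sqr_ge0.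
move=> h; apply/andP; split; nra.
Qed.

Lemma round (R : realType) n p N (Y : 'M[R]_(n,p)) : (0 < N)%N -> Y^T *m Y = 1%:M ->
  exists z, fro (Y - @grid R n p N z) <= (n * p)%:R / (N%:R ^+ 2).
Proof.
move=> N0 hY.
have := fun x : 'I_n * 'I_p => @round_entry R N (Y x.1 x.2) N0 (@stiefel_entry R n p Y x.1 x.2 hY).
move=> /choice [f hf].
exists (\matrix_(i, j) f (i, j)).
apply: (@le_trans _ _ (\sum_(i < n) \sum_(j < p) (1 / N%:R ^+ 2 : R))).
  apply: ler_sum => i _; apply: ler_sum => j _.
  by rewrite !mxE; exact: (hf (i, j)).
by rewrite !sumr_const !card_ord -mulrnA -[X in X <= _]mulr_natl mulnC mul1r.
Qed.
Definition bump (R : realType) n p (r : R) (Y : 'M[R]_(n,p)) : R :=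
  Num.max 0 (r - fro (Y - E0 R n p)).

Lemma bumpE (R : realType) n p (r : R) :
  bump r = fun Y : 'M[R]_(n,p) => Num.max 0 (r - \sum_i \sum_j (Y i j - E0 R n p i j) ^+ 2).
Proof.
apply/funext => Y; rewrite /bump /fro; congr (Num.max 0 (r - _)).
by apply: eq_bigr => i _; apply: eq_bigr => j _; rewrite !mxE.
Qed.

Lemma cont_sum (R : realType) (T : topologicalType) (I : Type) (s : seq I)
  (f : I -> T -> R^o) : (forall i, continuous (f i)) ->
  continuous (fun x => \sum_(i <- s) f i x).
Proof.
move=> hf; elim: s => [|a s IH].
  under eq_fun do rewrite big_nil; exact: cst_continuous.
under eq_fun do rewrite big_cons.
by move=> x; apply: continuousD; [exact: hf|exact: IH].
Qed.

Lemma bump_cont (R : realType) n p (r : R) : continuous (@bump R n p r).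
Proof.
rewrite bumpE => Y.
apply: (@continuous_max _ _ (cst 0) (fun Y : 'M[R]_(n,p) => r - \sum_i \sum_j (Y i j - E0 R n p i j) ^+ 2)).
  exact: cst_continuous.
apply: continuousB; first exact: cst_continuous.
apply: cont_sum => i; apply: cont_sum => j.
under eq_fun do rewrite expr2.
move=> Z; apply: (@continuousM _ _ (fun Y : 'M[R]_(n,p) => Y i j - E0 R n p i j) (fun Y : 'M[R]_(n,p) => Y i j - E0 R n p i j)); (apply: continuousB; [exact: coord_continuous|exact: cst_continuous]).
Qed.

Lemma bump_meas (R : realType) n p d (T : measurableType d) (X : T -> 'M[R]_(n,p))
  (Q : 'M[R]_n) (r : R) :
  (forall i j, measurable_fun setT (fun t => X t i j)) ->
  measurable_fun setT (fun t => bump r (Q *m X t)).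
Proof.
move=> hX; rewrite bumpE.
apply: (@measurable_realfun.measurable_maxr _ _ _ _ (cst 0) (fun t => r - \sum_i \sum_j ((Q *m X t) i j - E0 R n p i j) ^+ 2)).
  exact: measurable_cst.
apply: measurable_realfun.measurable_funB; first exact: measurable_cst.
apply: measurable_sum => i; apply: measurable_sum => j.
under eq_fun do rewrite expr2.
have h : measurable_fun setT (fun t => (Q *m X t) i j - E0 R n p i j).
  apply: measurable_realfun.measurable_funB; last exact: measurable_cst.
  under eq_fun do rewrite mxE.
  apply: measurable_sum => k; apply: measurable_realfun.measurable_funM; [exact: measurable_cst|exact: hX].
exact: measurable_realfun.measurable_funM.
Qed.
Lemma trans_aux (R : realType) n p (W : 'M[R]_(n,p)) : (p <= n)%N ->
  W^T *m W = 1%:M -> forall k, (k <= p)%N ->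
  exists Q : 'M[R]_n, Q^T *m Q = 1%:M /\
    forall i (j : 'I_p), (j < k)%N -> (Q *m W) i j = (i == j :> nat)%:R.
Proof.
move=> hpn hW; elim=> [_|k IH hk].
  by exists 1%:M; split; [rewrite trmx1 mulmx1|].
have [Q [hQ hQW]] := IH (ltnW hk).
set A := Q *m W in hQW.
have hA : A^T *m A = 1%:M.
  by rewrite /A trmx_mul mulmxA -(mulmxA W^T) hQ mulmx1 hW.
have eA : Q *m W = A by []. clearbody A.
have hAt (i j : 'I_p) : \sum_l A l i * A l j = (i == j)%:R.
  have := congr1 (fun M : 'M[R]_p => M i j) hA; rewrite !mxE => <-.
  by apply: eq_bigr => l _; rewrite !mxE.
pose kk : 'I_p := Ordinal hk.
have hkn : (k < n)%N by apply: leq_trans hk hpn.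
pose kn : 'I_n := Ordinal hkn.
pose v : 'cV[R]_n := \col_l (A l kk - (l == kn)%:R).
pose c := \sum_l (v l 0) ^+ 2.
have ha (j : 'I_p) : (j < k)%N -> \sum_l v l 0 * A l j = 0.
  move=> jk.
  under eq_bigr do rewrite mxE mulrBl.
  rewrite sumrB hAt sum_delta hQW //.
  have -> : (kk == j) = false by apply/negbTE; apply/eqP => e; move: jk; rewrite -e ltnn.
  have -> : (kn == j :> nat) = false by apply/negbTE; rewrite /= neq_ltn jk orbT.
  by rewrite subrr.
have hb : \sum_l v l 0 * A l kk = 1 - A kn kk.
  under eq_bigr do rewrite mxE mulrBl.
  by rewrite sumrB hAt sum_delta eqxx.
have hc : c = 2 - 2 * A kn kk.
  rewrite /c.
  have -> : \sum_l v l 0 ^+ 2 = \sum_l v l 0 * A l kk - \sum_l ((l == kn)%:R * v l 0).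
    rewrite -sumrB; apply: eq_bigr => l _.
    have e : v l 0 = A l kk - (l == kn)%:R by rewrite mxE.
    by rewrite expr2 {2}e mulrBr [X in _ - X]mulrC.
  have vk : v kn 0 = A kn kk - 1 by rewrite mxE eqxx.
  rewrite hb sum_delta vk.
  lra.
pose H := 1%:M - (2 / c) *: (v *m v^T).
exists (H *m Q); split; first exact: orth_mul (house v) hQ.
have hHA i (j : 'I_p) : (H *m Q *m W) i j = A i j - (2 / c) * v i 0 * (\sum_l v l 0 * A l j).
  rewrite -mulmxA eA /H mulmxBl mul1mx -scalemxAl -mulmxA !mxE.
  rewrite big_ord1 mxE mulrA; congr (_ - _ * _).
  by rewrite mxE; apply: eq_bigr => l _; rewrite mxE.
move=> i j; rewrite ltnS leq_eqVlt => /orP[/eqP jk|jk]; last first.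
  by rewrite hHA ha // mulr0 subr0 hQW.
have -> : j = kk by apply: val_inj.
rewrite hHA hb.
have AE : A i kk = v i 0 + (i == kk :> nat)%:R by rewrite mxE subrK.
rewrite AE.
have [c0|c0] := eqVneq c 0.
  have v0 : v i 0 = 0.
    apply/eqP; rewrite -sqrf_eq0; apply/eqP.
    move/eqP: c0; rewrite /c psumr_eq0 => [/allP/(_ i)|l _]; last exact: sqr_ge0.
    by rewrite mem_index_enum => /(_ isT) /implyP /(_ isT) /eqP.
  by rewrite v0 add0r mulr0 mul0r subr0.
have -> : 2 / c * v i 0 * (1 - A kn kk) = v i 0.
  rewrite hc in c0 *. field.
  move: c0; apply: contra => /eqP h; apply/eqP; lra.
by rewrite addrC addKr.
Qed.

Lemma stiefel_trans (R : realType) n p (W : 'M[R]_(n,p)) : (p <= n)%N ->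
  W^T *m W = 1%:M -> exists Q : 'M[R]_n, Q^T *m Q = 1%:M /\ Q *m W = E0 R n p.
Proof.
move=> hpn hW; have [Q [hQ hQW]] := trans_aux hpn hW (leqnn p).
exists Q; split => //; apply/matrixP => i j; rewrite hQW // mxE //.
Qed.

Section Integ.
Context (R : realType) (d : measure_display) (T : measurableType d) (P : probability T R).

Lemma int_cst (c : R) : (\int[P]_t (c%:E) = c%:E)%E.
Proof.
have := integral_cst P (@measurableT _ T) c%:E.
move=> ->; rewrite -[RHS]mule1; congr (_ * _)%E; exact: probability_setT.
Qed.

Lemma int_fin (f : T -> R) (c : R) : measurable_fun setT f ->
  (forall t, 0 <= f t <= c) -> (\int[P]_t (f t)%:E)%E \is a fin_num.
Proof.
move=> mf hf; rewrite ge0_fin_numE; last first.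
  by apply: integral_ge0 => t _; rewrite lee_fin; case/andP: (hf t).
apply: (@le_lt_trans _ _ (c%:E)); last exact: ltry.
rewrite -int_cst; apply: ge0_le_integral => //.
- by move=> t _; rewrite lee_fin; case/andP: (hf t).
- exact/measurable_realfun.measurable_EFinP.
- by move=> t _; rewrite lee_fin; case/andP: (hf t).
Qed.
End Integ.
Lemma bump_bnd (R : realType) n p (r : R) (Y : 'M[R]_(n,p)) : 0 < r -> 0 <= bump r Y <= r.
Proof.
move=> r0; rewrite /bump; apply/andP; split; first by rewrite le_max lexx.
rewrite ge_max (ltW r0) /=; have := fro_ge0 (Y - E0 R n p); lra.
Qed.

Lemma bump_pos (R : realType) n p (hpn : (p <= n)%N) (d : measure_display)
  (T : measurableType d) (P : probability T R) (X : T -> 'M[R]_(n,p))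
  (hX : haar_stiefel P X) (r : R) : 0 < r ->
  0 < fine (\int[P]_t (bump r (X t))%:E)%E.
Proof.
move=> r0; case: hX => hst hmeas hinv.
set I := (\int[P]_t (bump r (X t))%:E)%E.
have mb (Q : 'M[R]_n) : measurable_fun setT (fun t => bump r (Q *m X t)).
  exact: bump_meas.
have mb1 : measurable_fun setT (fun t => bump r (X t)).
  by have := mb 1%:M; under eq_fun do rewrite mul1mx.
have If : I \is a fin_num by apply: (int_fin _ mb1) => t; exact: bump_bnd.
pose N := (Num.trunc (8 * (n * p)%:R / r)).+1.
have N0 : (0 < N)%N by [].
pose b : R := (n * p)%:R / (N%:R ^+ 2).
have hb : 4 * b <= r / 2.
  have h1 : 8 * (n * p)%:R / r < N%:R := truncnS_gt _.
  have h2 : 8 * (n * p)%:R < r * N%:R.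
    by move: h1; rewrite ltr_pdivrMr // [N%:R * r]mulrC.
  have NR : 1 <= N%:R :> R by rewrite ler1n.
  have h3 : r * N%:R <= r * N%:R ^+ 2 by rewrite ler_pM2l // expr2 ler_peMl //; lra.
  rewrite /b; have NR2 : 0 < N%:R ^+ 2 :> R by rewrite exprn_gt0 //; lra.
  rewrite mulrA ler_pdivrMr // mulrAC ler_pdivlMr //; lra.
have hQ (z : 'M['I_(2 * N).+1]_(n,p)) : exists Q : 'M[R]_n, Q^T *m Q = 1%:M /\
    forall Y : 'M[R]_(n,p), Y^T *m Y = 1%:M -> fro (Y - @grid R n p N z) <= b ->
      fro (Q *m Y - E0 R n p) <= 4 * b.
  case: (pselect (exists Y' : 'M[R]_(n,p), Y'^T *m Y' = 1%:M /\ fro (Y' - @grid R n p N z) <= b)).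
    move=> [Y' [hY' hb']].
    have [Q [hQ hQY]] := stiefel_trans hpn hY'.
    exists Q; split => // Y hY hbY.
    rewrite -hQY -mulmxBr fro_orth //.
    have -> : Y - Y' = (Y - @grid R n p N z) + - (Y' - @grid R n p N z).
      by rewrite opprB addrA subrK.
    apply: le_trans (fro_add _ _) _; rewrite froN; lra.
  move=> hn; exists 1%:M; split; first by rewrite trmx1 mulmx1.
  by move=> Y hY hbY; exfalso; apply: hn; exists Y.
have [Qf hQf] := choice hQ.
have cover t : r / 2 <= \sum_z bump r (Qf z *m X t).
  have [z0 hz0] := round N0 (hst t).
  rewrite (bigD1 z0) //=.
  have h0 : 0 <= \sum_(z | z != z0) bump r (Qf z *m X t).
    by apply: sumr_ge0 => z _; case/andP: (bump_bnd (Qf z *m X t) r0).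
  have h1 : r / 2 <= bump r (Qf z0 *m X t).
    rewrite /bump le_max; apply/orP; right.
    have := (hQf z0).2 _ (hst t) hz0; lra.
  lra.
have key : ((r / 2)%:E <= (#|{: 'M['I_(2 * N).+1]_(n,p)}|%:R * fine I)%:E)%E.
  rewrite -(int_cst P (r / 2)).
  apply: (@le_trans _ _ (\int[P]_t (\sum_z bump r (Qf z *m X t))%:E)%E).
    apply: ge0_le_integral => //.
    - by move=> t _; rewrite lee_fin; lra.
    - apply/measurable_realfun.measurable_EFinP.
      exact: measurable_sum.
    - by move=> t _; rewrite lee_fin.
  under eq_integral do rewrite -sumEFin.
  rewrite ge0_integral_sum //; last first.
    - by move=> z t _; rewrite lee_fin; case/andP: (bump_bnd (Qf z *m X t) r0).
    - by move=> z; apply/measurable_realfun.measurable_EFinP; exact: mb.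
  have -> : \sum_z (\int[P]_t (bump r (Qf z *m X t))%:E)%E = \sum_(z : 'M['I_(2 * N).+1]_(n,p)) (fine I)%:E.
    apply: eq_bigr => z _.
    rewrite fineK // /I (hinv (Qf z) (hQf z).1 (bump r)) //.
    exact: bump_cont.
  by rewrite sumEFin sumr_const mulr_natl.
rewrite lee_fin in key.
have fI0 : 0 <= fine I by apply: fine_ge0; apply: integral_ge0 => t _; rewrite lee_fin; case/andP: (bump_bnd (X t) r0).
rewrite lt_neqAle fI0 andbT; apply/eqP => e; move: key; rewrite -e mulr0; lra.
Qed.
Lemma vnorm2_sq (R : realType) k (x : 'cV[R]_k) : vnorm2 x ^+ 2 = \sum_i x i 0 ^+ 2.
Proof. by rewrite /vnorm2 sqr_sqrtr //; apply: sumr_ge0 => i _; exact: sqr_ge0. Qed.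

Lemma vnorm2_ge0 (R : realType) k (x : 'cV[R]_k) : 0 <= vnorm2 x.
Proof. exact: sqrtr_ge0. Qed.

Lemma spec_ub (R : realType) n p (Psi : 'M[R]_(n,p)) (x : 'cV[R]_p) :
  vnorm2 x = 1 -> vnorm2 (Psi *m x) <= spec_norm Psi.
Proof.
move=> hx; apply: sup_upper_bound; last by exists x.
split; first by exists (vnorm2 (Psi *m x)), x.
exists (\sum_i \sum_k `|Psi i k|) => _ [y hy <-].
set B := \sum_i \sum_k `|Psi i k|.
have B0 : 0 <= B by apply: sumr_ge0 => i _; apply: sumr_ge0 => k _.
have hy1 : \sum_i y i 0 ^+ 2 = 1 by rewrite -vnorm2_sq hy expr1n.
have yk k : `|y k 0| <= 1.
  have : y k 0 ^+ 2 <= 1.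
    rewrite -hy1 (bigD1 k) //= lerDl; apply: sumr_ge0 => l _; exact: sqr_ge0.
  by move=> h; rewrite ler_norml; apply/andP; split; nra.
have c i : `|(Psi *m y) i 0| <= \sum_k `|Psi i k|.
  rewrite mxE; apply: le_trans (ler_norm_sum _ _ _) _.
  apply: ler_sum => k _; rewrite normrM -{2}(mulr1 `|Psi i k|).
  by apply: ler_wpM2l.
have cB i : \sum_k `|Psi i k| <= B.
  by rewrite /B (bigD1 i) //= lerDl; apply: sumr_ge0 => l _; apply: sumr_ge0.
rewrite -(ger0_norm B0) -sqrtr_sqr; apply: ler_wsqrtr.
rewrite -[B ^+ 2]/(B * B) {1}/B mulr_suml; apply: ler_sum => i _.
have ci0 : 0 <= \sum_k `|Psi i k| by apply: sumr_ge0.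
move: (c i) (cB i); rewrite ler_norml => /andP[h1 h2] h3; nra.
Qed.

Lemma inner_bnd (R : realType) n (a b : 'I_n -> R) (s : R) :
  \sum_i a i ^+ 2 = 1 -> 0 <= s -> \sum_i b i ^+ 2 <= s ^+ 2 ->
  \sum_i a i * b i <= s.
Proof.
move=> ha s0 hb.
have E : \sum_i (s * a i - b i) ^+ 2 =
    s ^+ 2 * \sum_i a i ^+ 2 - 2 * s * \sum_i a i * b i + \sum_i b i ^+ 2.
  rewrite !mulr_sumr -sumrB -big_split /=; apply: eq_bigr => i _; ring.
have h0 : 0 <= \sum_i (s * a i - b i) ^+ 2 by apply: sumr_ge0 => i _; exact: sqr_ge0.
rewrite E ha mulr1 in h0.
have [s00|sp] := eqVneq s 0.
  have bz i : b i = 0.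
    apply/eqP; rewrite -sqrf_eq0; apply/eqP.
    have : \sum_i b i ^+ 2 = 0.
      move: hb; rewrite s00 expr0n /= => hb'; apply/eqP; rewrite eq_le hb' /=.
      by apply: sumr_ge0 => l _; exact: sqr_ge0.
    move/eqP; rewrite psumr_eq0 => [/allP/(_ i)|l _]; last exact: sqr_ge0.
    by rewrite mem_index_enum => /(_ isT) /implyP /(_ isT) /eqP.
  by rewrite big1 ?s00 // => i _; rewrite bz mulr0.
have s1 : 0 < s by rewrite lt_neqAle eq_sym sp.
set S := \sum_i a i * b i in h0 *.
nra.
Qed.

Lemma etr_bnd (R : realType) n p (Psi : 'M[R]_(n,p)) (dd : 'I_p -> R)
  (M : 'M[R]_(n,p)) (V : 'M[R]_p) : (forall j, 0 <= dd j) -> stiefel M -> stiefel V ->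
  \tr (V *m diag_mx (\row_j dd j) *m M^T *m Psi) <= spec_norm Psi * \sum_j dd j.
Proof.
move=> hd hM hV.
have -> : V *m diag_mx (\row_j dd j) *m M^T *m Psi = V *m (diag_mx (\row_j dd j) *m (M^T *m Psi)).
  by rewrite !mulmxA.
rewrite mxtrace_mulC -!mulmxA mul_diag_mx /mxtrace mulr_sumr.
apply: ler_sum => j _; rewrite !mxE [X in _ <= X]mulrC; apply: ler_wpM2l => //.
pose x : 'cV[R]_p := col j V.
have hx : vnorm2 x = 1.
  have : \sum_i x i 0 ^+ 2 = 1.
    have := congr1 (fun A : 'M[R]_p => A j j) hV; rewrite !mxE eqxx /= => h; apply: etrans h; apply: esym.
    by apply: eq_bigr => l _; rewrite !mxE expr2.
  by rewrite /vnorm2 => ->; rewrite sqrtr1.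
have hw := spec_ub Psi hx.
have hs0 : 0 <= spec_norm Psi by apply: le_trans hw; exact: vnorm2_ge0.
have -> : \sum_j0 M^T j j0 * (Psi *m V) j0 j = \sum_i M i j * (Psi *m x) i 0.
  apply: eq_bigr => i _; rewrite !mxE; congr (_ * _); apply: eq_bigr => k _; rewrite !mxE //.
apply: inner_bnd => //.
  have := congr1 (fun A : 'M[R]_p => A j j) hM; rewrite !mxE eqxx /= => h; apply: etrans h; apply: esym.
  by apply: eq_bigr => l _; rewrite !mxE expr2.
rewrite -vnorm2_sq; have := vnorm2_ge0 (Psi *m x); nra.
Qed.
Definition Sd (R : realType) n p (dd : 'I_p -> R) (Y : 'M[R]_(n,p)) : R :=
  \sum_(i < n) \sum_(j < p) if (i == j :> nat) then dd j * Y i j else 0.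

Lemma Sd_diag (R : realType) n p (hpn : (p <= n)%N) (dd : 'I_p -> R) (Y : 'M[R]_(n,p)) :
  Sd dd Y = \sum_j dd j * Y (widen_ord hpn j) j.
Proof.
rewrite /Sd exchange_big; apply: eq_bigr => j _.
rewrite (bigD1 (widen_ord hpn j)) //= eqxx big1 ?addr0 // => i hi.
have -> : (i == j :> nat) = false.
  by apply/negbTE; apply: contra hi => /eqP h; apply/eqP; apply: val_inj.
by [].
Qed.

Lemma Sd_ub (R : realType) n p (hpn : (p <= n)%N) (dd : 'I_p -> R) (Y : 'M[R]_(n,p)) :
  (forall j, 0 <= dd j) -> Y^T *m Y = 1%:M -> Sd dd Y <= \sum_j dd j.
Proof.
move=> hd hY; rewrite (Sd_diag hpn); apply: ler_sum => j _.
rewrite -{2}(mulr1 (dd j)); apply: ler_wpM2l => //.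
by case/andP: (stiefel_entry (widen_ord hpn j) j hY).
Qed.

Lemma Sd_lb (R : realType) n p (hpn : (p <= n)%N) (dd : 'I_p -> R) (Y : 'M[R]_(n,p)) (r : R) :
  (forall j, 0 <= dd j) -> Y^T *m Y = 1%:M -> 0 < r ->
  bump r Y / r * expR ((1 - r / 2) * \sum_j dd j) <= expR (Sd dd Y).
Proof.
move=> hd hY r0.
have [b0|bp] := lerP (bump r Y) 0.
  apply: le_trans (ltW (expR_gt0 _)); rewrite pmulr_lle0 ?expR_gt0 //.
  by rewrite pmulr_lle0 // invr_gt0.
have hf : fro (Y - E0 R n p) < r.
  move: bp; rewrite /bump lt_max ltxx /=; lra.
have hb : bump r Y / r <= 1.
  by rewrite ler_pdivrMr // mul1r; case/andP: (bump_bnd Y r0).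
apply: (@le_trans _ _ (expR ((1 - r / 2) * \sum_j dd j))).
  rewrite -{2}(mul1r (expR _)); apply: ler_wpM2r => //; exact: ltW (expR_gt0 _).
rewrite ler_expR (Sd_diag hpn) mulr_sumr; apply: ler_sum => j _.
rewrite mulrC; apply: ler_wpM2l => //.
have := @fro_col R n p Y j (widen_ord hpn j) erefl hY; lra.
Qed.

Lemma Sd_meas (R : realType) n p d (T : measurableType d) (X : T -> 'M[R]_(n,p)) (dd : 'I_p -> R) :
  (forall i j, measurable_fun setT (fun t => X t i j)) ->
  measurable_fun setT (fun t => expR (Sd dd (X t))).
Proof.
move=> hX; apply: measurableT_comp; first exact: measurable_realfun.measurable_expR.
apply: measurable_sum => i; apply: measurable_sum => j.
case: (i == j :> nat); last exact: measurable_cst.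
apply: measurable_realfun.measurable_funM; [exact: measurable_cst|exact: hX].
Qed.

Unset Implicit Arguments.
Local Open Scope classical_set_scope.

Theorem lemma6 (R : realType) (n p : nat) (hp : (0 < p)%N) (hnp : (p <= n)%N)
  (d : measure_display) (T : measurableType d) (P : probability T R)
  (X : T -> 'M[R]_(n, p)) (hX : haar_stiefel P X) :
  exists K : R -> R,
    forall Psi : 'M[R]_(n, p), spec_norm Psi < 1 ->
      let eps0 := (1 - spec_norm Psi) / 2 in
      0 < K eps0 /\
      forall (dd : 'I_p -> R), (forall j, 0 < dd j) ->
      forall (M : 'M[R]_(n, p)) (V : 'M[R]_p), stiefel M -> stiefel V ->
        etr (V *m diag_mx (\row_j dd j) *m M^T *m Psi) / hyp0F1 P X dd
        < expR (- eps0 * \sum_(j < p) dd j) / K eps0.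
Proof.
exists (fun e => fine (\int[P]_t (bump e (X t))%:E)%E / e).
move=> Psi hPsi eps0.
have e0 : 0 < eps0 by rewrite /eps0; lra.
set I := (\int[P]_t (bump eps0 (X t))%:E)%E.
have Ipos : 0 < fine I := bump_pos hnp hX e0.
have K0 : 0 < fine I / eps0 by apply: divr_gt0.
split => // dd hd M V hM hV.
set K := fine I / eps0.
case: (hX) => hst hmeas hinv.
have hd0 j : 0 <= dd j := ltW (hd j).
set S := \sum_j dd j.
have S0 : 0 < S.
  rewrite /S (bigD1 (Ordinal hp)) //=.
  have := hd (Ordinal hp); have : 0 <= \sum_(j < p | j != Ordinal hp) dd j by apply: sumr_ge0.
  lra.
set F := hyp0F1 P X dd.
have mb1 : measurable_fun setT (fun t => bump eps0 (X t)).
  by have := @bump_meas R n p d T X 1%:M eps0 hmeas; under eq_fun do rewrite mul1mx.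
have If : I \is a fin_num by apply: (int_fin _ mb1) => t; exact: bump_bnd.
have mS := @Sd_meas R n p d T X dd hmeas.
have Jf : (\int[P]_t (expR (Sd dd (X t)))%:E)%E \is a fin_num.
  apply: (@int_fin R d T P _ (expR S) mS) => t.
  by rewrite (ltW (expR_gt0 _)) /= ler_expR; exact: (Sd_ub hnp hd0 (hst t)).
have FK : K * expR ((1 - eps0 / 2) * S) <= F.
  rewrite /F /hyp0F1 /Rintegral.
  have c0 : 0 <= expR ((1 - eps0 / 2) * S) / eps0 by apply: divr_ge0; [exact: ltW (expR_gt0 _)|exact: ltW].
  have -> : K * expR ((1 - eps0 / 2) * S) = fine ((expR ((1 - eps0 / 2) * S) / eps0)%:E * I)%E.
    by rewrite /K fineM //=; ring.
  apply: fine_le => //; first by rewrite fin_numM.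
  rewrite -ge0_integralZl_EFin //; last 2 first.
    - by move=> t _; rewrite lee_fin; case/andP: (bump_bnd (X t) e0).
    - exact/measurable_realfun.measurable_EFinP.
  apply: ge0_le_integral => //.
  - by move=> t _; rewrite -EFinM lee_fin; apply: mulr_ge0 => //; case/andP: (bump_bnd (X t) e0).
  - apply/measurable_realfun.measurable_EFinP.
    exact: measurable_realfun.measurable_funM (measurable_cst _) mb1.
  - exact/measurable_realfun.measurable_EFinP.
  move=> t _; rewrite -EFinM lee_fin.
  have := @Sd_lb R n p hnp dd (X t) eps0 hd0 (hst t) e0.
  by congr (_ <= _); rewrite /S; ring.
have e1 : expR ((1 - eps0) * S) < expR ((1 - eps0 / 2) * S).
  by rewrite ltr_expR ltr_pM2r //; lra.
have FK' : K * expR ((1 - eps0) * S) < F.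
  by apply: lt_le_trans FK; rewrite ltr_pM2l.
have Fpos : 0 < F by apply: le_lt_trans FK'; apply: mulr_ge0; [exact: ltW|exact: ltW (expR_gt0 _)].
have htr := etr_bnd Psi hd0 hM hV.
have ha : etr (V *m diag_mx (\row_j dd j) *m M^T *m Psi) <= expR (spec_norm Psi * S).
  by rewrite /etr ler_expR.
have hx : expR (- eps0 * S) * expR ((1 - eps0) * S) = expR (spec_norm Psi * S).
  by rewrite -expRD; congr expR; rewrite /eps0; field.
set E1 := expR ((1 - eps0) * S) in e1 FK' hx.
set x := expR (- eps0 * S) in hx *.
set et := etr _ in ha *.
have x0 : 0 < x := expR_gt0 _.
have E10 : 0 < E1 := expR_gt0 _.
have et0 : 0 < et := expR_gt0 _.
rewrite ltr_pdivrMr // mulrAC ltr_pdivlMr //.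
rewrite -hx in ha.
nra.
Qed.
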